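(* The radical (maximal solvable ideal) of the Lie algebra $L_0$ is spanned as a $k$-vector space by the following elements of $L_0$, where $\bar\alpha=\{\alpha_1,\dots,\alpha_n\}$ runs over all classes of parallel arrows of $Q$: (1) $\sum_{\alpha_i\in S}(\alpha_i,\alpha_i)$ for every equivalence class $S\in\bar\alpha/\!\approx$; (2) $(\alpha_i,\alpha_j)$ for $i\neq j$ whenever $(\alpha_i,\alpha_j)\in L_0$ and $(\alpha_j,\alpha_i)\notin L_0$ (i.e. $\alpha_j\le_{\langle Z\rangle}\alpha_i$ but not $\alpha_i\le_{\langle Z\rangle}\alpha_j$); (3) if $\operatorname{char}k=2$: $(\alpha_{i_1},\alpha_{i_2})$, $(\alpha_{i_2},\alpha_{i_1})$ and $(\alpha_{i_1},\alpha_{i_1})$ for every class $S=\{\alpha_{i_1},\alpha_{i_2}\}\in\bar\alpha/\!\approx$ with exactly two elements.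
   Context: Let $k$ be an algebraically closed field and $Q$ a finite connected quiver; $Q_n$ = paths of length $n$ ($Q_0$ vertices, $Q_1$ arrows), $s,t$ = source, terminus. Let $Z$ be a minimal set of paths of length $\ge2$ (no proper subpath of an element of $Z$ lies in $Z$) with $\Lambda=kQ/\langle Z\rangle$ finite dimensional; $B$ = paths (vertices included) not containing an element of $Z$ as subpath, $B_n=B\cap Q_n$. Paths are parallel if they have the same source and terminus; $X//Y$ = pairs of parallel paths in $X\times Y$, $k(X//Y)$ the vector space with that basis. For a path $\varepsilon$ and $(a,\gamma)\in Q_1//B$, $\varepsilon^{(a,\gamma)}$ = sum of all paths in $B$ obtained by replacing one occurrence of $a$ in $\varepsilon$ by $\gamma$ ($0$ if none); $(\eta,\varepsilon^{(a,\gamma)})=\sum_i(\eta,\varepsilon_i)$ if $\varepsilon^{(a,\gamma)}=\sum_i\varepsilon_i$. $\psi_0:k(Q_0//B)\to k(Q_1//B)$, $(e,\gamma)\mapsto\sum_{a\in Q_1,\,s(a)=e,\,a\gamma\in B}(a,a\gamma)-\sum_{a\in Q_1,\,t(a)=e,\,\gamma a\in B}(a,\gamma a)$; $\psi_1:k(Q_1//B)\to k(Z//B)$, $(a,\gamma)\mapsto\sum_{p\in Z}(p,p^{(a,\gamma)})$. With the bracket $[(a,\gamma),(b,\varepsilon)]=(b,\varepsilon^{(a,\gamma)})-(a,\gamma^{(b,\varepsilon)})$, $\operatorname{Ker}\psi_1$ is a Lie algebra, $\operatorname{Im}\psi_0$ an ideal, and $\operatorname{Ker}\psi_1/\operatorname{Im}\psi_0\cong\operatorname{H}^1(\Lambda,\Lambda)$.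 $L_0$ is the Lie subalgebra of $\operatorname{Ker}\psi_1/\operatorname{Im}\psi_0$ formed by the classes of elements of $k(Q_1//Q_1)\cap\operatorname{Ker}\psi_1$; for $(a,b)\in Q_1//Q_1$ we say $(a,b)\in L_0$ if $(a,b)\in\operatorname{Ker}\psi_1$ and then also write $(a,b)$ for its class; its bracket is $[(a,c),(b,d)]=\delta_{a,d}(b,c)-\delta_{b,c}(a,d)$. For parallel arrows $a,b$ write $a\le_{\langle Z\rangle}b$ if $p^{(b,a)}=0$ for every $p\in Z$ (equivalently $(b,a)\in L_0$). Parallelism is an equivalence relation on $Q_1$; its classes are the classes of parallel arrows. On each class $\bar\alpha$, $a\approx b$ means $a\le_{\langle Z\rangle}b$ and $b\le_{\langle Z\rangle}a$; $\bar\alpha/\!\approx$ is the set of its equivalence classes. *)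

(* Defs.v *)
From HB Require Import structures.
From mathcomp Require Import all_boot all_order all_algebra.
From mathcomp Require Import boolp.
Set Implicit Arguments. Unset Strict Implicit. Unset Printing Implicit Defensive.
Import GRing.Theory.
Local Open Scope ring_scope.

(* A path of positive length is the nonempty list of its arrows in the order
   in which they are traversed (so consecutive arrows a, b satisfy t a = s b).
   Trivial paths (vertices) play no role below except that they belong to B
   and are finitely many. *)
Section QuiverDefs.
Variables (V A : finType) (s t : A -> V).

Definition par (a b : A) : bool := (s a == s b) && (t a == t b).

Definition quiver_connected : Prop :=
  forall v w : V,
    connect (fun x y => [exists a, ((s a == x) && (t a == y))
                                   || ((s a == y) && (t a == x))]) v w.

Definition is_path (p : seq A) : bool :=
  match p with [::] => false | a :: p' => path (fun x y => t x == s y) a p' end.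

Variable Z : pred (seq A).

Definition inB (p : seq A) : Prop := is_path p /\ forall z, Z z -> ~~ infix z p.

Definition Z_paths_len_ge2 : Prop := forall p, Z p -> is_path p /\ (2 <= size p)%N.
Definition Z_minimal : Prop := forall p q, Z p -> Z q -> infix q p -> q = p.
(* Lambda = kQ/<Z> finite dimensional, i.e. its basis B is finite *)
Definition B_finite : Prop := exists r : seq (seq A), forall p, inB p -> p \in r.

Variable k : fieldType.

(* k(Q1 x Q1): coefficient functions; k(Q1//Q1) = those supported on
   parallel pairs *)
Definition W := {ffun A * A -> k}.
Definition scl (c : k) (x : W) : W := [ffun i => c * x i].
Definition delta (a b : A) : W := [ffun ab => (ab == (a, b))%:R].
Definition in_kQ1Q1 (x : W) : Prop := forall a b, ~~ par a b -> x (a, b) = 0.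

(* coefficient of the path q in p^{(a,b)} (sum of the paths of B obtained by
   replacing one occurrence of the arrow a in p by the arrow b) *)
Definition repl_coef (p : seq A) (a b : A) (q : seq A) : k :=
  if `[< inB q >] then
    (#|[set i : 'I_(size p) | (nth a p i == a) && (set_nth a p i b == q)]|)%:R
  else 0.

(* coefficient of the basis element (p, q) of k(Z//B) in psi_1(x) *)
Definition psi1_coef (x : W) (p q : seq A) : k :=
  \sum_(ab : A * A) x ab * repl_coef p ab.1 ab.2 q.

Definition K0 (x : W) : Prop :=
  in_kQ1Q1 x /\ forall p q, Z p -> psi1_coef x p q = 0.

Definition inL0 (a b : A) : Prop := par a b /\ K0 (delta a b).

Definition leZ (a b : A) : Prop := forall p q, Z p -> repl_coef p b a q = 0.
Definition approxZ (a b : A) : Prop := leZ a b /\ leZ b a.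

Definition psi0e (e : V) : W :=
  [ffun ab => if ab.1 == ab.2 then (s ab.1 == e)%:R - (t ab.1 == e)%:R else 0].

Definition lie (x y : W) : W :=
  \sum_(ac : A * A) \sum_(bd : A * A)
     scl (x ac * y bd)
       (scl (ac.1 == bd.2)%:R (delta bd.1 ac.2)
        - scl (bd.1 == ac.2)%:R (delta ac.1 bd.2)).

Definition spanW (P : W -> Prop) : W -> Prop := fun x =>
  exists r : seq W, (forall y, y \in r -> P y) /\
    exists c : W -> k, x = \sum_(y <- r) scl (c y) y.
Definition sub_set (P Q : W -> Prop) : Prop := forall x, P x -> Q x.
Definition is_subspace (U : W -> Prop) : Prop :=
  U 0 /\ (forall x y, U x -> U y -> U (x + y)) /\ (forall c x, U x -> U (scl c x)).
Definition addS (U1 U2 : W -> Prop) : W -> Prop :=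
  fun z => exists u v, U1 u /\ U2 v /\ z = u + v.
Definition brk (U1 U2 : W -> Prop) : W -> Prop :=
  spanW (fun z => exists x y, U1 x /\ U2 y /\ z = lie x y).

(* Im psi_0 /\ k(Q1//Q1) = psi_0(k(Q0//B_0)) = spanW of the psi_0(e,e) *)
Definition D0 : W -> Prop := spanW (fun x => exists e, x = psi0e e).

(* L_0 = (k(Q1//Q1) /\ Ker psi_1) / D0.  Subspaces of L_0 are represented by
   their preimages U with D0 <= U <= K0. *)
Fixpoint derL0 (I : W -> Prop) (n : nat) : W -> Prop :=
  match n with
  | 0 => I
  | n'.+1 => addS (brk (derL0 I n') (derL0 I n')) D0
  end.

Definition L0_ideal (I : W -> Prop) : Prop :=
  [/\ is_subspace I, sub_set D0 I, sub_set I K0 &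
      forall x y, K0 x -> I y -> I (lie x y)].

Definition L0_solvable (I : W -> Prop) : Prop := exists n, sub_set (derL0 I n) D0.

Definition L0_radical (R : W -> Prop) : Prop :=
  [/\ L0_ideal R, L0_solvable R &
      forall I, L0_ideal I -> L0_solvable I -> sub_set I R].

Definition rad_gens (x : W) : Prop :=
  (exists a : A, x = [ffun bc : A * A =>
      if `[< bc.1 = bc.2 /\ par a bc.1 /\ approxZ a bc.1 >] then 1 else 0])
  \/ (exists ai aj : A, [/\ ai != aj, par ai aj, inL0 ai aj, ~ inL0 aj ai &
                            x = delta ai aj])
  \/ ((2%N \in [pchar k]) /\
      exists a1 a2 : A, [/\ a1 != a2, par a1 a2, approxZ a1 a2,
         (forall b, par a1 b -> approxZ a1 b -> b = a1 \/ b = a2) &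
         [\/ x = delta a1 a2, x = delta a2 a1 | x = delta a1 a1]]).

End QuiverDefs.

(* Main.v *)
Require Import Defs.
From HB Require Import structures.
From mathcomp Require Import all_boot all_order all_algebra.
From mathcomp Require Import boolp.
From mathcomp Require Import ring zify.
Set Implicit Arguments. Unset Strict Implicit. Unset Printing Implicit Defensive.
Import GRing.Theory.
Local Open Scope ring_scope.


Section Mat.
Variables (A : finType) (k : fieldType).
Local Notation W := (W A k).

Definition mm (x y : W) : W := [ffun uv => \sum_w x (uv.1, w) * y (w, uv.2)].

Lemma sum_delta (F : A * A -> k) q : \sum_p F p * (p == q)%:R = F q.
Proof.
rewrite (bigD1 q) //= eqxx mulr1 big1 ?addr0 // => p /negbTE ->; by rewrite mulr0.
Qed.

Lemma sum_pair2 (F : A * A -> k) v :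
  \sum_p F p * (p.2 == v)%:R = \sum_w F (w, v).
Proof.
transitivity (\sum_a \sum_c F (a, c) * (c == v)%:R).
  by rewrite pair_bigA; apply: eq_bigr; case.
apply: eq_bigr => a _.
rewrite (bigD1 v) //= eqxx mulr1 big1 ?addr0 // => c /negbTE ->; by rewrite mulr0.
Qed.

Lemma sum_pair1 (F : A * A -> k) u :
  \sum_p (p.1 == u)%:R * F p = \sum_w F (u, w).
Proof.
transitivity (\sum_a \sum_c (a == u)%:R * F (a, c)).
  by rewrite pair_bigA; apply: eq_bigr; case.
rewrite (bigD1 u) //= [X in _ + X]big1 ?addr0.
  by apply: eq_bigr => c _; rewrite eqxx mul1r.
by move=> a /negbTE Ha; apply: big1 => c _; rewrite Ha mul0r.
Qed.

Lemma lieE (x y : W) u v :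
  lie x y (u, v) = \sum_w y (u, w) * x (w, v) - \sum_w x (u, w) * y (w, v).
Proof.
rewrite /lie sum_ffunE.
under eq_bigr do rewrite sum_ffunE.
have E1 : forall ac bd : A * A,
  (scl (x ac * y bd) (scl (ac.1 == bd.2)%:R (delta k bd.1 ac.2)
        - scl (bd.1 == ac.2)%:R (delta k ac.1 bd.2))) (u, v)
  = x ac * (y bd * (bd == (u, ac.1))%:R) * (ac.2 == v)%:R
    - (x ac * (ac.1 == u)%:R) * (y bd * (bd == (ac.2, v))%:R).
  move=> [a c] [b d] /=; rewrite !ffunE /=.
  rewrite !xpair_eqE.
  by repeat (match goal with |- context[(?p == ?q)] => case: (p =P q) => [?|?]; try subst end);
    try congruence; simpl; ring.
under eq_bigr => ac _ do rewrite (eq_bigr _ (fun bd _ => E1 ac bd)) sumrB -mulr_suml -mulr_sumr -mulr_sumr !sum_delta.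
rewrite sumrB.
rewrite (eq_bigr (fun p => (fun q => y (u, q.1) * x q) p * (p.2 == v)%:R)); last by move=> p _; rewrite [x p * _]mulrC.
rewrite (sum_pair2 (fun q => y (u, q.1) * x q)) /=; congr (_ - _).
rewrite (eq_bigr (fun p => (p.1 == u)%:R * (fun q => x q * y (q.2, v)) p)); last by move=> p _; rewrite mulrAC mulrC.
by rewrite (sum_pair1 (fun q => x q * y (q.2, v))).
Qed.

Lemma sclE c (x : W) uv : scl c x uv = c * x uv.
Proof. by rewrite ffunE. Qed.

Lemma deltaE (a b : A) uv : delta k a b uv = (uv == (a, b))%:R.
Proof. by rewrite ffunE. Qed.

Lemma span_seq (P : W -> Prop) (l : seq (k * W)) :
  (forall p, p \in l -> P p.2) -> spanW P (\sum_(p <- l) scl p.1 p.2).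
Proof.
move=> Hl; exists (undup (map snd l)); split.
  move=> y; rewrite mem_undup => /mapP [p Hp ->]; exact: Hl.
exists (fun y => \sum_(p <- l | p.2 == y) p.1).
apply/ffunP => uv; rewrite !sum_ffunE.
transitivity (\sum_(p <- l) \sum_(y <- undup (map snd l))
                 (if p.2 == y then p.1 * p.2 uv else 0)).
  apply: eq_big_seq => p Hp.
  rewrite (bigD1_seq p.2) ?undup_uniq ?mem_undup ?map_f //= eqxx big1 ?addr0 ?sclE //.
  by move=> y /negbTE; rewrite eq_sym => ->.
rewrite exchange_big; apply: eq_bigr => y _.
rewrite sclE (big_mkcond (fun p => p.2 == y)) mulr_suml /=; apply: eq_bigr => p _.
by case: eqP => [->|]; rewrite ?mul0r.
Qed.

Lemma spanW_0 (P : W -> Prop) : spanW P 0.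
Proof. by exists [::]; split => //; exists (fun _ => 0); rewrite big_nil. Qed.

Lemma spanW_in (P : W -> Prop) x : P x -> spanW P x.
Proof.
move=> Hx; exists [:: x]; split; first by move=> y; rewrite inE => /eqP ->.
exists (fun _ => 1); rewrite big_seq1; apply/ffunP => uv; by rewrite sclE mul1r.
Qed.

Lemma spanW_add (P : W -> Prop) x y : spanW P x -> spanW P y -> spanW P (x + y).
Proof.
move=> [r1 [H1 [c1 ->]]] [r2 [H2 [c2 ->]]].
have := @span_seq P ([seq (c1 z, z) | z <- r1] ++ [seq (c2 z, z) | z <- r2]).
rewrite big_cat !big_map /=; apply => p; rewrite mem_cat => /orP[] /mapP [z Hz ->] /=.
  exact: H1.
exact: H2.
Qed.

Lemma spanW_scl (P : W -> Prop) c x : spanW P x -> spanW P (scl c x).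
Proof.
move=> [r1 [H1 [c1 ->]]].
have := @span_seq P [seq (c * c1 z, z) | z <- r1].
rewrite big_map /=.
have -> : scl c (\sum_(y <- r1) scl (c1 y) y) = \sum_(j <- r1) scl (c * c1 j) j.
  apply/ffunP => uv; rewrite sclE !sum_ffunE mulr_sumr; apply: eq_bigr => z _.
  by rewrite !sclE mulrA.
apply => p /mapP [z Hz ->] /=; exact: H1.
Qed.

Lemma spanW_sub (P Q : W -> Prop) : is_subspace Q -> (forall x, P x -> Q x) ->
  forall x, spanW P x -> Q x.
Proof.
move=> [Q0 [QD QS]] HPQ x [r [Hr [c ->]]].
elim: r Hr => [|y r IH] Hr; rewrite ?big_nil ?big_cons //; apply: QD.
  by apply: QS; apply: HPQ; apply: Hr; rewrite mem_head.
by apply: IH => z Hz; apply: Hr; rewrite inE Hz orbT.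
Qed.

Lemma spanW_subspace (P : W -> Prop) : is_subspace (spanW P).
Proof.
split; first exact: spanW_0.
split; [exact: spanW_add | exact: spanW_scl].
Qed.

Lemma spanW_sum (P : W -> Prop) (I : finType) (F : I -> W) :
  (forall i, spanW P (F i)) -> spanW P (\sum_i F i).
Proof.
move=> H; apply: (big_ind (spanW P)); [exact: spanW_0 | exact: spanW_add | by move=> i _].
Qed.


Lemma scl1 (x : W) : scl 1 x = x.
Proof. by apply/ffunP => uv; rewrite sclE mul1r. Qed.

Lemma scl0 (x : W) : scl 0 x = 0.
Proof. by apply/ffunP => uv; rewrite sclE mul0r ffunE. Qed.

End Mat.


Lemma set_nth_def (T : Type) (x0 x1 : T) p i b :
  (i < size p)%N -> set_nth x0 p i b = set_nth x1 p i b.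
Proof. by elim: p i => [|x p IH] [|i] //= Hi; rewrite IH. Qed.

Lemma set_nth_cat (T : Type) (x0 : T) s1 s2 i y :
  set_nth x0 (s1 ++ s2) i y =
  if (i < size s1)%N then set_nth x0 s1 i y ++ s2
  else s1 ++ set_nth x0 s2 (i - size s1) y.
Proof.
elim: s1 i => [|x s1 IH] [|i] //=; rewrite ?subn0 //.
by rewrite IH ltnS subSS; case: ifP.
Qed.

Lemma size_set_nth_lt (T : Type) (x0 : T) p i y :
  (i < size p)%N -> size (set_nth x0 p i y) = size p.
Proof. by move=> Hi; rewrite size_set_nth; apply/maxn_idPr. Qed.

Lemma set_nth_id (T : eqType) (x0 : T) p i :
  (i < size p)%N -> set_nth x0 p i (nth x0 p i) = p.
Proof. by elim: p i => [|x p IH] [|i] //= Hi; rewrite IH. Qed.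

Section Comb.
Variables (V A : finType) (s t : A -> V) (Z : pred (seq A)) (k : fieldType).
Hypotheses (HZ : Z_paths_len_ge2 s t Z) (Hmin : Z_minimal Z).

Local Notation inB := (inB s t Z).
Local Notation e := (fun x y => t x == s y).

Lemma path_head x y p : t x = t y -> path e x p -> path e y p.
Proof. by case: p => [|z p] //= ->. Qed.

Lemma path_set x p i b : path e x p -> (i < size p)%N ->
  par s t (nth x p i) b -> path e x (set_nth x p i b).
Proof.
elim: p x i => [|y p IH] x [|i] //=.
  move=> /andP[H1 H2] _ /andP[/eqP Hs /eqP Ht].
  by rewrite -Hs H1 /=; apply: path_head H2.
move=> /andP[H1 H2] Hi Hp; rewrite H1 /=.
rewrite (set_nth_def x y) //; apply: IH => //.
by rewrite (set_nth_default x).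
Qed.

Lemma is_path_set p i b : is_path s t p -> (i < size p)%N ->
  par s t (nth b p i) b -> is_path s t (set_nth b p i b).
Proof.
case: p => [|x p] //=; case: i => [|i] /=.
  move=> H _ /andP[/eqP Hs /eqP Ht]; by apply: path_head H.
move=> H Hi Hp; rewrite (set_nth_def b x) //; apply: path_set => //.
by rewrite (set_nth_default b).
Qed.

Lemma notB_Z p : Z p -> ~ inB p.
Proof. by move=> Zp [_ /(_ p Zp)]; rewrite infix_refl. Qed.

Lemma repl_nz p a b q : Z p -> repl_coef s t Z k p a b q != 0 ->
  [/\ inB q, a != b & exists2 i, (i < size p)%N & nth a p i = a /\ set_nth a p i b = q].
Proof.
move=> Zp; rewrite /repl_coef; case: asboolP => // Bq.
case: (set_0Vmem [set i : 'I_(size p) | (nth a p i == a) && (set_nth a p i b == q)]) => [->|[i]].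
  by rewrite cards0 eqxx.
rewrite inE => /andP[/eqP Hi /eqP Hq] _.
split => //; last by exists i.
apply/eqP => Eab; subst b; apply: (notB_Z Zp).
by have := set_nth_id a (ltn_ord i); rewrite Hi Hq => <-.
by rewrite eqxx.
Qed.

Lemma repl_uniq (p : seq A) (a b c d : A) i j :
  (i < size p)%N -> (j < size p)%N -> nth a p i = a -> nth c p j = c ->
  a != b -> c != d -> set_nth a p i b = set_nth c p j d ->
  [/\ i = j, a = c & b = d].
Proof.
move=> Hi Hj Hpi Hpj Hab Hcd E.
rewrite (set_nth_def a c) // in E.
have Ei := congr1 (fun l => nth c l i) E; have Ej := congr1 (fun l => nth c l j) E.
rewrite /= !nth_set_nth /= !eqxx in Ei Ej.
have Hpi' : nth c p i = a by rewrite (set_nth_default a).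
case: (i =P j) => [Eij|/eqP Nij]; last first.
  by rewrite eq_sym (negbTE Nij) Hpj in Ej; rewrite Ej eqxx in Hcd.
subst j; rewrite eqxx in Ei; split => //; by rewrite -Hpi' Hpj.
Qed.

Lemma repl_one p a b q i : Z p -> inB q -> (i < size p)%N -> nth a p i = a -> a != b ->
  set_nth a p i b = q -> repl_coef s t Z k p a b q = 1.
Proof.
move=> Zp Bq Hi Hpi Hab Hq; rewrite /repl_coef; case: asboolP => // _.
have -> : [set j : 'I_(size p) | (nth a p j == a) && (set_nth a p j b == q)] = [set Ordinal Hi].
  apply/setP => j; rewrite !inE; apply/andP/eqP.
    move=> [/eqP H1 /eqP H2]; apply: val_inj => /=.
    by have [] := repl_uniq (ltn_ord j) Hi H1 Hpi Hab Hab (etrans H2 (esym Hq)).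
  by move=> -> /=; rewrite Hpi Hq.
by rewrite cards1.
Qed.


Lemma par_refl a : par s t a a. Proof. by rewrite /par !eqxx. Qed.
Lemma par_sym a b : par s t a b -> par s t b a.
Proof. by rewrite /par => /andP[/eqP -> /eqP ->]; rewrite !eqxx. Qed.
Lemma par_trans a b c : par s t a b -> par s t b c -> par s t a c.
Proof. by rewrite /par => /andP[/eqP -> /eqP ->]. Qed.

Definition Rl u v := par s t u v /\ leZ s t Z k v u.
Definition cls u v := Rl u v /\ Rl v u.

Lemma leZ_refl a : leZ s t Z k a a.
Proof.
move=> p q Zp; apply/eqP; apply: contraT => /(repl_nz Zp) [_]; by rewrite eqxx.
Qed.

Lemma Rrefl u : Rl u u.
Proof. split; [exact: par_refl | exact: leZ_refl]. Qed.

Lemma K0P (x : W A k) : K0 s t Z x <-> forall u v, x (u, v) != 0 -> Rl u v.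
Proof.
split.
  move=> [Hpar Hpsi] u v Hx; split.
    by case Hp: (par s t u v) => //; rewrite Hpar ?Hp // eqxx in Hx.
  move=> p q Zp; apply/eqP; apply: contraT => Hr.
  have := Hpsi p q Zp; rewrite /psi1_coef (bigD1 (u, v)) //= big1 ?addr0.
    by move/eqP; rewrite mulf_eq0 (negbTE Hx) (negbTE Hr).
  move=> [c d] /= Hne; case: (repl_coef s t Z k p c d q =P 0) => [->|/eqP Hr'].
    by rewrite mulr0.
  have [_ Huv [i Hi [Hpi Hq]]] := repl_nz Zp Hr.
  have [_ Hcd [j Hj [Hpj Hq']]] := repl_nz Zp Hr'.
  have [_ Ecu Edv] := repl_uniq Hj Hi Hpj Hpi Hcd Huv (etrans Hq' (esym Hq)).
  by subst c d; rewrite eqxx in Hne.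
move=> H; split.
  move=> a b Hnp; apply/eqP; apply: contraT => /H [Hp _]; by rewrite Hp in Hnp.
move=> p q Zp; apply: big1 => [[a b]] _ /=.
case: (x (a, b) =P 0) => [->|/eqP Hx]; first by rewrite mul0r.
by have [_ ->] := H _ _ Hx; rewrite ?mulr0.
Qed.

Lemma leZ_trans a b c : par s t a b -> par s t b c ->
  leZ s t Z k a b -> leZ s t Z k b c -> leZ s t Z k a c.
Proof.
move=> Pab Pbc Lab Lbc p q Zp; apply/eqP; apply: contraT.
move=> /(repl_nz Zp) [Bq Hca [i Hi [Hpi Hq]]].
have Hone := repl_one Zp Bq Hi Hpi Hca Hq.
case: (b =P c) => [Ebc|/eqP Nbc].
  by subst b; move: (Lab p q Zp); rewrite Hone => /eqP; rewrite oner_eq0.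
case: (a =P b) => [Eab|/eqP Nab].
  by subst a; move: (Lbc p q Zp); rewrite Hone => /eqP; rewrite oner_eq0.
set q' := set_nth c p i b.
have Hpi' : nth b p i = c by rewrite (set_nth_default c).
have NB : ~ inB q'.
  move=> Bq'; move: (Lbc p q' Zp).
  by rewrite (repl_one Zp Bq' Hi Hpi _ erefl) ?(eq_sym c) // => /eqP; rewrite oner_eq0.
have Pq' : is_path s t q'.
  rewrite /q' (set_nth_def c b) //; apply: is_path_set => //.
    by have [] := HZ Zp.
  by rewrite Hpi'; apply: par_sym.
have [z [Zz Iz]] : exists z, Z z /\ infix z q'.
  case: (pselect (exists z, Z z /\ infix z q')) => // Hn; exfalso; apply: NB.
  split => // z Zz; apply/negP => Iz; apply: Hn; by exists z.
move/infixP: Iz => [s1 [s2 Eq']].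
have Hsq' : size q' = size p by rewrite size_set_nth_lt.
have Ep : p = set_nth c q' i c.
  by rewrite /q' set_set_nth eqxx -{1}(set_nth_id c Hi) Hpi.
have Eq : q = set_nth c q' i a.
  by rewrite /q' set_set_nth eqxx -Hq; apply: set_nth_def.
have Hs : size q' = (size s1 + size z + size s2)%N by rewrite Eq' !size_cat addnA.
case: (ltnP i (size s1)) => H1.
  have : infix z p.
    by rewrite Ep Eq' set_nth_cat H1 infix_infix.
  move=> /(Hmin Zp Zz) Ezp; move: Hs; rewrite Hsq' -Ezp; lia.
case: (ltnP i (size s1 + size z)) => H2; last first.
  have : infix z p.
    by rewrite Ep Eq' set_nth_cat ltnNge H1 /= set_nth_cat ltnNge leq_subRL // H2 /= infix_infix.
  move=> /(Hmin Zp Zz) Ezp; move: Hs Hi H2; rewrite Hsq' -Ezp; lia.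
set j := (i - size s1)%N.
have Hj : (j < size z)%N by rewrite /j; lia.
have Hzj : nth b z j = b.
  have : nth c q' i = b by rewrite /q' nth_set_nth /= eqxx.
  rewrite Eq' nth_cat ltnNge H1 /= nth_cat -/j Hj => <-.
  by apply: set_nth_default.
set z' := set_nth b z j a.
have Bz' : inB z'.
  split.
    rewrite /z' (set_nth_def b a) //; apply: is_path_set => //.
      by have [] := HZ Zz.
    by rewrite (set_nth_default b) // Hzj; apply: par_sym.
  move=> y Zy; apply/negP => Iy.
  have Iq : infix z' q.
    rewrite Eq Eq' set_nth_cat ltnNge H1 /= set_nth_cat -/j Hj /z' (set_nth_def c b) //.
    exact: infix_infix.
  by have := Bq.2 y Zy; rewrite (infix_trans Iy Iq).
move: (Lab z z' Zz).
by rewrite (repl_one Zz Bz' Hj Hzj _ erefl) ?(eq_sym b) // => /eqP; rewrite oner_eq0.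
Qed.

Lemma Rtrans u v w : Rl u v -> Rl v w -> Rl u w.
Proof.
move=> [Puv Luv] [Pvw Lwv]; split; first exact: par_trans Pvw.
apply: leZ_trans Lwv Luv; [exact: par_sym | exact: par_sym].
Qed.

End Comb.


Lemma mul0_cond (k : fieldType) (p q : k) : (p != 0 -> q != 0 -> False) -> p * q = 0.
Proof.
move=> H; case: (p =P 0) => [->|/eqP Hp]; first by rewrite mul0r.
case: (q =P 0) => [->|/eqP Hq]; first by rewrite mulr0.
by case: (H Hp Hq).
Qed.

Lemma sum_only (A : finType) (k : fieldType) (F : A -> k) w0 :
  (forall w, w != w0 -> F w = 0) -> \sum_w F w = F w0.
Proof. by move=> H; rewrite (bigD1 w0) //= big1 ?addr0 // => w /H. Qed.

Lemma sum_two (A : finType) (k : fieldType) (F : A -> k) w1 w2 : w1 != w2 ->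
  (forall w, w != w1 -> w != w2 -> F w = 0) -> \sum_w F w = F w1 + F w2.
Proof.
move=> N H; rewrite (bigD1 w1) //= (bigD1 w2) 1?eq_sym //= big1 ?addr0 //.
by move=> w /andP[]; apply: H.
Qed.

Section Alg.
Variables (V A : finType) (s t : A -> V) (Z : pred (seq A)) (k : fieldType).
Hypotheses (HZ : Z_paths_len_ge2 s t Z) (Hmin : Z_minimal Z).

Local Notation W := (W A k).
Local Notation R := (Rl s t Z k).
Local Notation C := (cls s t Z k).
Local Notation K := (K0 s t Z (k:=k)).
Local Notation E := (delta k).

Lemma Rt u v w : R u v -> R v w -> R u w.
Proof. exact: (Rtrans (k:=k) HZ Hmin). Qed.

Lemma Cr u : C u u. Proof. by split; apply: Rrefl. Qed.
Lemma Cs u v : C u v -> C v u. Proof. by case. Qed.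
Lemma Ct u v w : C u v -> C v w -> C u w.
Proof. by move=> [H1 H2] [H3 H4]; split; [apply: Rt H3|apply: Rt H2]. Qed.

Lemma KR (x : W) u v : K x -> x (u, v) != 0 -> R u v.
Proof. by move=> /(K0P s t Z); apply. Qed.

Lemma KE u v : R u v -> K (E u v).
Proof.
move=> H; apply/(K0P s t Z) => a b; rewrite deltaE.
by case: ((a, b) =P (u, v)) => [[-> ->] _ //|_]; rewrite eqxx.
Qed.

Lemma K_subspace : is_subspace K.
Proof.
split; first by apply/(K0P s t Z) => u v; rewrite ffunE eqxx.
split.
  move=> x y Hx Hy; apply/(K0P s t Z) => u v; rewrite ffunE.
  case: (x (u, v) =P 0) => [->|/eqP H]; last by move=> _; apply: KR H.
  by rewrite add0r => /(KR Hy).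
move=> c x Hx; apply/(K0P s t Z) => u v; rewrite ffunE mulf_eq0 negb_or => /andP[_].
exact: KR.
Qed.

Lemma lie_sub (x y : W) : lie x y = - lie y x.
Proof.
apply/ffunP => [[u v]]; rewrite ffunE !lieE.
rewrite opprB; congr (_ - _); apply: eq_bigr => w _; exact: mulrC.
Qed.

Lemma lie_K (x y : W) : K x -> K y -> K (lie x y).
Proof.
move=> Hx Hy; apply/(K0P s t Z) => u v Hne.
case: (pselect (R u v)) => // NR; exfalso; move: Hne.
rewrite lieE !big1 ?subr0 ?eqxx // => w _; apply: mul0_cond => H1 H2; apply: NR.
  by apply: Rt (KR Hx H1) (KR Hy H2).
by apply: Rt (KR Hy H1) (KR Hx H2).
Qed.

Lemma lie_addl (x1 x2 y : W) : lie (x1 + x2) y = lie x1 y + lie x2 y.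
Proof.
apply/ffunP => [[u v]]; rewrite ffunE !lieE.
under eq_bigr do rewrite ffunE mulrDr.
under [X in _ - X]eq_bigr do rewrite ffunE mulrDl.
rewrite !big_split /=; ring.
Qed.

Lemma lie_addr (x y1 y2 : W) : lie x (y1 + y2) = lie x y1 + lie x y2.
Proof. by rewrite lie_sub lie_addl opprD -!lie_sub. Qed.

Lemma lieEl (p q : A) (y : W) u v :
  lie (E p q) y (u, v) = y (u, p) * (v == q)%:R - (u == p)%:R * y (q, v).
Proof.
rewrite lieE (sum_only (w0 := p)); last first.
  by move=> w Hw; rewrite deltaE xpair_eqE (negbTE Hw) mulr0.
rewrite (sum_only (w0 := q)); last first.
  by move=> w Hw; rewrite deltaE xpair_eqE (negbTE Hw) andbF mul0r.
by rewrite !deltaE !xpair_eqE !eqxx /= andbT.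
Qed.

Lemma lieEE (p q r s' : A) :
  lie (E p q) (E r s') = scl (s' == p)%:R (E r q) - scl (q == r)%:R (E p s').
Proof.
apply/ffunP => [[u v]]; rewrite lieEl !ffunE /= !xpair_eqE.
by repeat (match goal with |- context[(?p == ?q)] => case: (p =P q) => [?|?]; try subst end);
    try congruence; simpl; ring.
Qed.


Definition good2 a := 2 \in [pchar k] /\
  exists2 a', a' != a & C a a' /\ (forall b, C a b -> b = a \/ b = a').

Lemma good2_C a b : good2 a -> C a b -> good2 b.
Proof.
move=> [H2 [a' Na [Caa' Hcl]]] Cab; split => //.
case: (Hcl b Cab) => Eb; subst b; first by exists a'.
exists a; first by rewrite eq_sym.
split; first exact: Cs.
by move=> c Cc; case: (Hcl c (Ct Caa' Cc)) => ->; [right|left].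
Qed.

Lemma bad_C a b : ~ good2 a -> C a b -> ~ good2 b.
Proof. by move=> Hb Cab Hg; apply: Hb; apply: good2_C Hg (Cs Cab). Qed.

Lemma good2_two a b : good2 a -> C a b -> a != b -> forall c, C a c -> c = a \/ c = b.
Proof.
move=> [_ [a' Na [Caa' Hcl]]] Cab Nab c Cac.
case: (Hcl b Cab) => Eb; first by subst b; rewrite eqxx in Nab.
by subst a'; apply: Hcl.
Qed.

Lemma bad_third a b : ~ good2 a -> C a b -> a != b ->
  (2%:R : k) != 0 \/ exists c, [/\ C a c, c != a & c != b].
Proof.
move=> Hbad Cab Nab.
case: (pselect (2 \in [pchar k])) => H2; last first.
  left; apply/negP => H; apply: H2; by rewrite inE /= H.
right; case: (pselect (exists c, [/\ C a c, c != a & c != b])) => // Hn.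
exfalso; apply: Hbad; split => //; exists b; first by rewrite eq_sym.
split => // c Cac; case: (c =P a) => [->|/eqP Nca]; first by left.
case: (c =P b) => [->|/eqP Ncb]; first by right.
by case: Hn; exists c.
Qed.

Definition Pset (x : W) : Prop := K x /\
  forall a b, C a b -> a != b -> ~ good2 a -> x (a, b) = 0 /\ x (a, a) = x (b, b).

Lemma Pset_subspace : is_subspace Pset.
Proof.
have [K0 [KD KS]] := K_subspace.
split; first by split => // a b _ _ _; rewrite !ffunE.
split.
  move=> x y [Kx Hx] [Ky Hy]; split; first exact: KD.
  move=> a b Cab Nab Hb; have [H1 H2] := Hx a b Cab Nab Hb; have [H3 H4] := Hy a b Cab Nab Hb.
  by rewrite !ffunE H1 H2 H3 H4 addr0.
move=> c x [Kx Hx]; split; first exact: KS.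
move=> a b Cab Nab Hb; have [H1 H2] := Hx a b Cab Nab Hb.
by rewrite !ffunE H1 H2 mulr0.
Qed.

Lemma Pset_entry (x y : W) a b : K x -> Pset y -> C a b -> ~ good2 a ->
  lie x y (a, b) = x (a, b) * (y (a, a) - y (b, b)).
Proof.
move=> Kx [Ky Hy] Cab Hb; rewrite lieE (sum_only (w0 := a)); last first.
  move=> w Nwa; apply: mul0_cond => H1 H2.
  have Raw := KR Ky H1; have Rwb := KR Kx H2.
  have Caw : C a w by split => //; apply: Rt Rwb Cab.2.
  have Naw : a != w by rewrite eq_sym.
  by have := (Hy a w Caw Naw Hb).1; move/eqP: H1.
rewrite (sum_only (w0 := b)); last first.
  move=> w Nwb; apply: mul0_cond => H1 H2.
  have Raw := KR Kx H1; have Rwb := KR Ky H2.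
  have Cwb : C w b by split => //; apply: Rt Cab.2 Raw.
  have Hbw : ~ good2 w by apply: bad_C Hb (Ct Cab (Cs Cwb)).
  by have := (Hy w b Cwb Nwb Hbw).1; move/eqP: H2.
ring.
Qed.

Lemma Pset_ideal (x y : W) : K x -> Pset y -> Pset (lie x y).
Proof.
move=> Kx Py; split; first exact: lie_K Kx Py.1.
move=> a b Cab Nab Hb.
have Hb' := bad_C Hb Cab.
rewrite !Pset_entry //; try exact: Cr.
by rewrite (Py.2 a b Cab Nab Hb).2 !subrr !mulr0.
Qed.

Definition DL (d : W) : Prop := (forall u v, u != v -> d (u, v) = 0) /\
  (forall u v, par s t u v -> d (u, u) = d (v, v)).

Lemma DL_subspace : is_subspace DL.
Proof.
split; first by split => *; rewrite !ffunE.
split.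
  move=> x y [H1 H2] [H3 H4]; split => u v H; rewrite !ffunE.
    by rewrite H1 ?H3 ?addr0.
  by rewrite (H2 u v H) (H4 u v H).
move=> c x [H1 H2]; split => u v H; rewrite !ffunE.
  by rewrite H1 ?mulr0.
by rewrite (H2 u v H).
Qed.

Lemma D0_DL x : D0 s t x -> DL x.
Proof.
apply: spanW_sub; first exact: DL_subspace.
move=> y [e ->]; split => u v H; rewrite !ffunE /=; first by rewrite (negbTE H).
by move: H; rewrite /par !eqxx => /andP[/eqP -> /eqP ->].
Qed.

Lemma DL_Pset d : DL d -> Pset d.
Proof.
move=> [H1 H2]; split.
  apply/(K0P s t Z) => u v; case: (u =P v) => [->|/eqP N]; first by move=> _; apply: Rrefl.
  by rewrite H1 // eqxx.
move=> a b Cab Nab _; split; first exact: H1.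
by apply: H2; case: Cab => [[]].
Qed.

Lemma DL_lie (x d : W) : K x -> DL d -> lie d x = 0.
Proof.
move=> Kx [H1 H2]; apply/ffunP => [[u v]]; rewrite lieE ffunE.
rewrite (sum_only (w0 := v)); last by move=> w N; rewrite H1 ?mulr0.
rewrite (sum_only (w0 := u)); last by move=> w N; rewrite H1 ?mul0r // eq_sym.
case: (x (u, v) =P 0) => [->|/eqP N]; first by rewrite mulr0 mul0r subrr.
by have [P _] := KR Kx N; rewrite (H2 u v P) mulrC subrr.
Qed.


Lemma lie_diag (p : A) (y : W) u v :
  lie (E p p) y (u, v) = ((v == p)%:R - (u == p)%:R) * y (u, v).
Proof.
rewrite lieEl; have [->|Nv] := eqVneq v p; have [->|Nu] := eqVneq u p;
  rewrite ?eqxx ?(negbTE Nv) ?(negbTE Nu) /=; ring.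
Qed.

Ltac eqcases :=
  repeat (match goal with |- context[(?p == ?q)] => is_var p; is_var q; case: (p =P q) => [?|?]; try subst end);
  try congruence;
  try (match goal with H : is_true (?x != ?x) |- _ => by rewrite eqxx in H end).

Lemma stepA (I : W -> Prop) : L0_ideal s t Z I ->
  forall z a b, I z -> C a b -> a != b -> ~ good2 a -> z (a, b) != 0 ->
  exists c d, [/\ C c d, c != d, ~ good2 c & I (E c d)].
Proof.
rewrite /L0_ideal => -[[I0 [ID IS]] _ IK Ilie] z a b Iz Cab Nab Hb Hz.
set y2 := lie (E b b) (lie (E a a) z).
have Iy1 : I (lie (E a a) z) by apply: Ilie (KE (Cr a).1) Iz.
have Iy2 : I y2 by apply: Ilie (KE (Cr b).1) Iy1.
have Ey2 u v : y2 (u, v) = ((v == b)%:R - (u == b)%:R) * (((v == a)%:R - (u == a)%:R) * z (u, v)).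
  by rewrite /y2 !lie_diag.
case: (bad_third Hb Cab Nab) => [H2 | [c [Cac Nca Ncb]]].
  set y3 := lie (E a a) y2.
  have Iy3 : I y3 by apply: Ilie (KE (Cr a).1) Iy2.
  exists a, b; split => //.
  have -> : E a b = scl (- (2%:R * z (a, b))^-1) y2 + scl ((2%:R * z (a, b))^-1) y3.
    apply/ffunP => [[u v]]; rewrite !ffunE /= /y3 lie_diag !Ey2 !xpair_eqE.
    eqcases; rewrite /=; try ring.
    by field; rewrite Hz H2.
  by apply: ID; apply: IS.
set y4 := lie (E c a) y2.
have Iy4 : I y4 by apply: Ilie (KE Cac.2) Iy2.
exists c, b; split => //; first exact: Ct (Cs Cac) Cab.
  exact: bad_C Hb Cac.
have -> : E c b = scl (z (a, b))^-1 y4.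
  apply/ffunP => [[u v]]; rewrite !ffunE /= /y4 lieEl !Ey2 !xpair_eqE.
  eqcases; rewrite /=; try ring.
  by field.
by apply: IS.
Qed.


Lemma der_lie (I : W -> Prop) n x y c :
  derL0 s t I n x -> derL0 s t I n y -> derL0 s t I n.+1 (scl c (lie x y)).
Proof.
move=> Hx Hy; exists (scl c (lie x y)), 0; split; last split.
- by apply: spanW_scl; apply: spanW_in; exists x, y.
- exact: spanW_0.
- by rewrite addr0.
Qed.

Lemma der_lie1 (I : W -> Prop) n x y :
  derL0 s t I n x -> derL0 s t I n y -> derL0 s t I n.+1 (lie x y).
Proof. by move=> Hx Hy; rewrite -[lie x y]scl1; apply: der_lie. Qed.

Lemma lieE3 (u v w : A) : u != v -> lie (E w v) (E u w) = E u v.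
Proof. by move=> N; rewrite lieEE eqxx ?(negbTE N) 1?eq_sym ?(negbTE N) scl1 scl0 subr0. Qed.

Lemma lieE_alpha (r s' q : A) : q != r -> lie (E s' q) (E r s') = E r q.
Proof. by move=> N; rewrite lieEE eqxx ?(negbTE N) 1?eq_sym ?(negbTE N) scl1 scl0 subr0. Qed.

Lemma lieE_beta (p r s' : A) : p != s' ->
  scl (-1) (lie (E p r) (E r s')) = E p s'.
Proof.
move=> N; rewrite lieEE eqxx eq_sym (negbTE N) scl1 scl0.
by apply/ffunP => uv; rewrite !ffunE; ring.
Qed.

Lemma stepB (I : W -> Prop) : L0_ideal s t Z I -> L0_solvable s t I ->
  forall c d, C c d -> c != d -> ~ good2 c -> I (E c d) -> False.
Proof.
rewrite /L0_ideal => -[[I0 [ID IS]] _ IK Ilie] [n Hn] c d Ccd Ncd Hb Icd.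
have Fin : forall x, derL0 s t I n x -> x = E c d -> False.
  move=> x /Hn /D0_DL [H1 _] Ex; have := H1 c d Ncd.
  by rewrite Ex deltaE eqxx => /eqP; rewrite oner_eq0.
apply: (Fin (E c d)) => //.
case: (bad_third Hb Ccd Ncd) => [H2 | [e [Cce Nec Ned]]].
  set h := lie (E d c) (E c d).
  have Eh u v : h (u, v) = (u == c)%:R * (v == c)%:R - (u == d)%:R * (v == d)%:R.
    by rewrite /h lieEl !deltaE !xpair_eqE; eqcases; rewrite /=; ring.
  have E1 : E c d = scl (2%:R)^-1 (lie (E c d) h).
    apply/ffunP => [[u v]]; rewrite !ffunE /= lieEl !Eh !xpair_eqE.
    eqcases; rewrite /=; try ring; by field.
  have E2 : E d c = scl (- (2%:R)^-1) (lie (E d c) h).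
    apply/ffunP => [[u v]]; rewrite !ffunE /= lieEl !Eh !xpair_eqE.
    eqcases; rewrite /=; try ring; by field.
  have Rdc := Ccd.2.
  have Ih : I h by apply: Ilie (KE Rdc) Icd.
  have Idc : I (E d c) by rewrite E2; apply: IS; apply: Ilie (KE Rdc) Ih.
  suff : forall m, [/\ derL0 s t I m (E c d), derL0 s t I m (E d c) & derL0 s t I m h].
    by case/(_ n).
  elim => [|m [H1 H3 H4]]; first by split.
  split; first by rewrite E1; apply: der_lie.
    by rewrite E2; apply: der_lie.
  exact: der_lie1.
have Rcd := Ccd.1; have Rdc := Ccd.2; have Rce := Cce.1; have Rec := Cce.2.
have Rde : R d e by apply: Rt Rdc Rce.
have Red : R e d by apply: Rt Rec Rcd.
have Nce : c != e by rewrite eq_sym.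
have Nde : d != e by rewrite eq_sym.
have Ndc : d != c by rewrite eq_sym.
have Ice : I (E c e) by rewrite -(lieE_alpha d Nec); apply: Ilie (KE Rde) Icd.
have Ide : I (E d e) by rewrite -(lieE_beta c Nde); apply: IS; apply: Ilie (KE Rdc) Ice.
have Idc : I (E d c) by rewrite -(lieE_alpha e Ncd); apply: Ilie (KE Rec) Ide.
have Ied : I (E e d) by rewrite -(lieE_beta c Ned); apply: IS; apply: Ilie (KE Rec) Icd.
have Iec : I (E e c) by rewrite -(lieE_alpha d Nce); apply: Ilie (KE Rdc) Ied.
set S3 := [:: c; d; e].
suff : forall m u v, u \in S3 -> v \in S3 -> u != v -> derL0 s t I m (E u v).
  by move/(_ n c d); apply; rewrite ?inE ?eqxx ?orbT.
elim => [|m IH] u v.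
  rewrite !inE => /or3P [] /eqP -> /or3P [] /eqP -> N //=; by rewrite eqxx in N.
move=> Hu Hv N.
have [w Hw /andP [Nwu Nwv]] : exists2 w, w \in S3 & (w != u) && (w != v).
  move: Hu Hv N; rewrite !inE => /or3P [] /eqP -> /or3P [] /eqP -> N;
    try (by rewrite eqxx in N);
    first [ by exists c; rewrite ?inE ?eqxx //; apply/andP
          | by exists d; rewrite ?inE ?eqxx ?orbT //; apply/andP
          | by exists e; rewrite ?inE ?eqxx ?orbT //; apply/andP ].
rewrite -(lieE3 w N); apply: der_lie1; apply: IH => //; by rewrite eq_sym.
Qed.


Lemma I_sub_P (I : W -> Prop) : L0_ideal s t Z I -> L0_solvable s t I -> sub_set I Pset.
Proof.
move=> HI HS x Ix; have [[I0 [ID IS]] _ IK Ilie] := HI.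
have key : forall z, I z -> forall a b, C a b -> a != b -> ~ good2 a -> z (a, b) = 0.
  move=> z Iz a b Cab Nab Hb; case: (z (a, b) =P 0) => // /eqP Hz.
  have [c [d [Ccd Ncd Hc Icd]]] := stepA HI Iz Cab Nab Hb Hz.
  by case: (stepB HI HS Ccd Ncd Hc Icd).
split; first exact: IK.
move=> a b Cab Nab Hb; split; first exact: key.
have Iz : I (lie (E a b) x) by apply: Ilie (KE Cab.1) Ix.
have := key _ Iz a b Cab Nab Hb; rewrite lieEl !eqxx mulr1 mul1r.
by move/eqP; rewrite subr_eq0 => /eqP.
Qed.

Lemma term0 (x y : W) u v w : K x -> K y -> R v u -> ~ C u w -> y (u, w) * x (w, v) = 0.
Proof.
move=> Kx Ky Rvu NC; apply: mul0_cond => H1 H2; apply: NC; split; first exact: KR Ky H1.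
by apply: Rt (KR Kx H2) Rvu.
Qed.

Lemma good2_diag (x y : W) u v : K x -> K y -> good2 u -> C u v ->
  lie x y (u, u) = lie x y (v, v).
Proof.
move=> Kx Ky Hg Cuv; case: (u =P v) => [->//|/eqP Nuv].
have two := good2_two Hg Cuv Nuv.
have out : forall w, w != u -> w != v -> ~ C u w.
  by move=> w N1 N2 /two [] E'; [move: N1|move: N2]; rewrite E' eqxx.
have Rvu := Cuv.2.
rewrite !lieE.
rewrite (sum_two (w1 := u) (w2 := v)) // => [|w N1 N2]; last first.
  exact: term0 (Cr u).1 (out w N1 N2).
rewrite [X in _ - X = _](sum_two (w1 := u) (w2 := v)) // => [|w N1 N2]; last first.
  exact: term0 (Cr u).1 (out w N1 N2).
rewrite (sum_two (w1 := u) (w2 := v)) // => [|w N1 N2]; last first.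
  exact: term0 (Cr v).1 (fun H => out w N1 N2 (Ct Cuv H)).
rewrite [X in _ = _ - X](sum_two (w1 := u) (w2 := v)) // => [|w N1 N2]; last first.
  exact: term0 (Cr v).1 (fun H => out w N1 N2 (Ct Cuv H)).
apply/eqP; rewrite -subr_eq0.
set X := y (u, v) * x (v, u) - x (u, v) * y (v, u).
have -> : y (u, u) * x (u, u) + y (u, v) * x (v, u) - (x (u, u) * y (u, u) + x (u, v) * y (v, u)) -
  (y (v, u) * x (u, v) + y (v, v) * x (v, v) - (x (v, u) * y (u, v) + x (v, v) * y (v, v))) = X + X.
  rewrite /X; ring.
by rewrite addrr_pchar2 //; case: Hg.
Qed.


Definition H1 (x : W) := K x /\
  forall u v, C u v -> (~ good2 u -> x (u, v) = 0) /\ x (u, u) = x (v, v).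
Definition H2 (x : W) := K x /\
  forall u v, C u v -> [/\ u != v -> x (u, v) = 0, ~ good2 u -> x (u, u) = 0
                         & x (u, u) = x (v, v)].
Definition fw u := #|[set c | `[< R u c >]]|.
Definition Nm m (x : W) := K x /\ forall u v, x (u, v) != 0 -> (fw v + m <= fw u)%N.

Lemma fw_le u v : R u v -> (fw v <= fw u)%N.
Proof.
move=> Ruv; apply: subset_leq_card; apply/subsetP => c; rewrite !inE.
by move/asboolP => H; apply/asboolP; apply: Rt Ruv H.
Qed.

Lemma fw_lt u v : R u v -> ~ R v u -> (fw v < fw u)%N.
Proof.
move=> Ruv NR; apply: proper_card; apply/properP; split.
  apply/subsetP => c; rewrite !inE.
  by move/asboolP => H; apply/asboolP; apply: Rt Ruv H.
exists u; rewrite !inE; first by apply/asboolP; apply: (Cr u).1.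
by apply/asboolP.
Qed.

Lemma H1_subspace : is_subspace H1.
Proof.
have [K0 [KD KS]] := K_subspace.
split; first by split => // u v _; rewrite !ffunE.
split.
  move=> x y [Kx Hx] [Ky Hy]; split; first exact: KD.
  move=> u v Cuv; have [H3 H4] := Hx u v Cuv; have [H5 H6] := Hy u v Cuv.
  by split; rewrite !ffunE ?H4 ?H6 // => Hb; rewrite H3 ?H5 ?addr0.
move=> c x [Kx Hx]; split; first exact: KS.
move=> u v Cuv; have [H3 H4] := Hx u v Cuv.
by split; rewrite !ffunE ?H4 // => Hb; rewrite H3 ?mulr0.
Qed.

Lemma H2_subspace : is_subspace H2.
Proof.
have [K0 [KD KS]] := K_subspace.
split; first by split => // u v _; rewrite !ffunE.
split.
  move=> x y [Kx Hx] [Ky Hy]; split; first exact: KD.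
  move=> u v Cuv; have [H3 H4 H5] := Hx u v Cuv; have [H6 H7 H8] := Hy u v Cuv.
  split; rewrite !ffunE.
  - by move=> N; rewrite H3 ?H6 ?addr0.
  - by move=> N; rewrite H4 ?H7 ?addr0.
  - by rewrite H5 H8.
move=> c x [Kx Hx]; split; first exact: KS.
move=> u v Cuv; have [H3 H4 H5] := Hx u v Cuv.
split; rewrite !ffunE.
- by move=> N; rewrite H3 ?mulr0.
- by move=> N; rewrite H4 ?mulr0.
- by rewrite H5.
Qed.

Lemma Nm_subspace m : is_subspace (Nm m).
Proof.
have [K0 [KD KS]] := K_subspace.
split; first by split => // u v; rewrite !ffunE eqxx.
split.
  move=> x y [Kx Hx] [Ky Hy]; split; first exact: KD.
  move=> u v; rewrite ffunE; case: (x (u, v) =P 0) => [->|/eqP N]; last by move=> _; apply: Hx.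
  by rewrite add0r; apply: Hy.
move=> c x [Kx Hx]; split; first exact: KS.
by move=> u v; rewrite ffunE mulf_eq0 negb_or => /andP[_]; apply: Hx.
Qed.


Lemma T1 (x y : W) : Pset x -> Pset y -> H1 (lie x y).
Proof.
move=> Px Py; split; first exact: lie_K Px.1 Py.1.
move=> u v Cuv; split.
  move=> Hb; rewrite (Pset_entry Px.1 Py Cuv Hb).
  case: (u =P v) => [->|/eqP N]; first by rewrite subrr mulr0.
  by rewrite (Py.2 u v Cuv N Hb).2 subrr mulr0.
case: (pselect (good2 u)) => [Hg|Hb]; first exact: good2_diag Px.1 Py.1 Hg Cuv.
have Hb' := bad_C Hb Cuv.
rewrite (Pset_entry Px.1 Py (Cr u) Hb) (Pset_entry Px.1 Py (Cr v) Hb').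
by rewrite !subrr !mulr0.
Qed.

Lemma H1_bad0 (x y : W) u v : H1 x -> H1 y -> C u v -> ~ good2 u -> lie x y (u, v) = 0.
Proof.
move=> [Kx Hx] [Ky Hy] Cuv Hb; rewrite lieE !big1 ?subr0 // => w _.
  case: (pselect (C u w)) => [Cuw|NC]; first by rewrite ((Hx u w Cuw).1 Hb) mul0r.
  exact: term0 Ky Kx Cuv.2 NC.
case: (pselect (C u w)) => [Cuw|NC]; first by rewrite ((Hy u w Cuw).1 Hb) mul0r.
exact: term0 Kx Ky Cuv.2 NC.
Qed.

Lemma T2 (x y : W) : H1 x -> H1 y -> H2 (lie x y).
Proof.
move=> H1x H1y; have [Kx Hx] := H1x; have [Ky Hy] := H1y.
split; first exact: lie_K.
move=> u v Cuv; split.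
- move=> Nuv; case: (pselect (good2 u)) => [Hg|Hb]; last exact: H1_bad0.
  have two := good2_two Hg Cuv Nuv.
  have out : forall w, w != u -> w != v -> ~ C u w.
    by move=> w N1 N2 /two [] E'; [move: N1|move: N2]; rewrite E' eqxx.
  rewrite lieE.
  rewrite (sum_two (w1 := u) (w2 := v)) // => [|w N1 N2]; last first.
    exact: term0 Kx Ky Cuv.2 (out w N1 N2).
  rewrite [X in _ - X = _](sum_two (w1 := u) (w2 := v)) // => [|w N1 N2]; last first.
    exact: term0 Ky Kx Cuv.2 (out w N1 N2).
  rewrite (Hx u v Cuv).2 (Hy u v Cuv).2; ring.
- move=> Hb; exact: H1_bad0 (Cr u) Hb.
case: (pselect (good2 u)) => [Hg|Hb]; first exact: good2_diag Kx Ky Hg Cuv.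
rewrite !H1_bad0 //; try exact: Cr.
exact: bad_C Hb Cuv.
Qed.

Lemma T3 (x y : W) : H2 x -> H2 y -> Nm 1 (lie x y).
Proof.
move=> [Kx Hx] [Ky Hy]; split; first exact: lie_K.
move=> u v Hne; have Ruv := KR (lie_K Kx Ky) Hne.
case: (pselect (R v u)) => [Rvu|NR]; last by rewrite addn1; apply: fw_lt.
exfalso; have Cuv : C u v by [].
move: Hne; rewrite lieE (sum_only (w0 := v)); last first.
  move=> w N; case: (pselect (C u w)) => [Cuw|NC]; last exact: term0 Kx Ky Rvu NC.
  have Cwv : C w v by apply: Ct (Cs Cuw) Cuv.
  by have [H _ _] := Hx w v Cwv; rewrite (H N) mulr0.
rewrite (sum_only (w0 := u)); last first.
  move=> w N; case: (pselect (C u w)) => [Cuw|NC]; last exact: term0 Ky Kx Rvu NC.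
  have [H _ _] := Hx u w Cuw; rewrite H ?mul0r //; by rewrite eq_sym.
have [_ _ ->] := Hx u v Cuv.
by rewrite mulrC subrr eqxx.
Qed.

Lemma T4 (x y : W) m : (0 < m)%N -> Nm m x -> Nm m y -> Nm m.+1 (lie x y).
Proof.
move=> Hm [Kx Hx] [Ky Hy]; split; first exact: lie_K.
move=> u v Hne.
case: (pselect (exists w, y (u, w) * x (w, v) != 0)) => [[w]|N1].
  rewrite mulf_eq0 negb_or => /andP[H1 H2].
  have := Hy u w H1; have := Hx w v H2; lia.
case: (pselect (exists w, x (u, w) * y (w, v) != 0)) => [[w]|N2].
  rewrite mulf_eq0 negb_or => /andP[H1 H2].
  have := Hx u w H1; have := Hy w v H2; lia.
exfalso; move: Hne; rewrite lieE !big1 ?subr0 ?eqxx // => w _; apply/eqP; apply: contraT => H.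
  by case: N2; exists w.
by case: N1; exists w.
Qed.

Lemma Nm_top (x : W) : Nm #|A|.+1 x -> x = 0.
Proof.
move=> [_ Hx]; apply/ffunP => [[u v]]; rewrite ffunE.
case: (x (u, v) =P 0) => // /eqP N; have := Hx u v N.
have : (fw u <= #|A|)%N by apply: max_card.
lia.
Qed.

Definition lvl n : W -> Prop :=
  match n with 0 => Pset | 1 => H1 | 2 => H2 | n'.+3 => Nm n'.+1 end.

Lemma lvl_K n x : lvl n x -> K x.
Proof. by case: n => [[]|[[]|[[]|n [] ]]]. Qed.

Lemma lvl_subspace n : is_subspace (lvl n).
Proof.
case: n => [|[|[|n]]] /=; [exact: Pset_subspace|exact: H1_subspace|exact: H2_subspace|].
exact: Nm_subspace.
Qed.

Lemma lvl_step n x y : lvl n x -> lvl n y -> lvl n.+1 (lie x y).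
Proof.
case: n => [|[|[|n]]] /=; [exact: T1|exact: T2|exact: T3|].
exact: T4.
Qed.

Lemma DL_K d : DL d -> K d.
Proof. by move/DL_Pset => []. Qed.

Lemma lie_D (h1 h2 d1 d2 : W) : K h1 -> K h2 -> DL d1 -> DL d2 ->
  lie (h1 + d1) (h2 + d2) = lie h1 h2.
Proof.
move=> K1 K2 D1 D2.
rewrite lie_addl !lie_addr (DL_lie K2 D1) (DL_lie (DL_K D2) D1).
rewrite (lie_sub h1 d2) (DL_lie K1 D2).
by rewrite oppr0 !addr0.
Qed.

Lemma der_lvl n x : derL0 s t Pset n x -> addS (lvl n) (@D0 _ _ s t k) x.
Proof.
elim: n x => [|n IH] x /=.
  by move=> Px; exists x, 0; split => //; split; [exact: spanW_0 | rewrite addr0].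
move=> [b [d [Hb [Hd ->]]]]; exists b, d; split => //.
apply: (spanW_sub (lvl_subspace n.+1)) Hb => z [x1 [y1 [H1 [H2 ->]]]].
have [h1 [d1 [L1 [D1 ->]]]] := IH _ H1; have [h2 [d2 [L2 [D2 ->]]]] := IH _ H2.
rewrite (lie_D (lvl_K L1) (lvl_K L2) (D0_DL D1) (D0_DL D2)).
exact: lvl_step.
Qed.

Lemma Pset_solvable : L0_solvable s t Pset.
Proof.
exists #|A|.+3 => x /der_lvl [h [d [Lh [Dd ->]]]].
by rewrite (Nm_top Lh) add0r.
Qed.

Lemma Pset_ideal' : L0_ideal s t Z Pset.
Proof.
split; first exact: Pset_subspace.
- by move=> x /D0_DL /DL_Pset.
- by move=> x [].
by move=> x y Kx Py; apply: Pset_ideal.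
Qed.


Lemma CP a b : C a b <-> par s t a b /\ approxZ s t Z k a b.
Proof.
split; first by move=> [[P1 L1] [P2 L2]]; split => //; split.
by move=> [P [L1 L2]]; split; split => //; apply: par_sym.
Qed.

Lemma inL0P a b : inL0 s t Z k a b <-> R a b.
Proof.
split; last by move=> H; split; [exact: H.1 | exact: KE].
move=> [P Kd]; apply: (KR Kd); by rewrite deltaE eqxx oner_eq0.
Qed.

Definition g1 (a : A) : W := [ffun bc : A * A =>
  if `[< bc.1 = bc.2 /\ par s t a bc.1 /\ approxZ s t Z k a bc.1 >] then 1 else 0].

Lemma g1E a u v : g1 a (u, v) = if (u == v) && `[< C a u >] then 1 else 0.
Proof.
rewrite ffunE /=; case: (u =P v) => [<-|Nuv] /=.
  case: asboolP => H1; case: asboolP => H2 //; exfalso.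
    by apply: H2; apply/CP; case: H1 => _.
  by apply: H1; split => //; apply/CP.
by case: asboolP => // [[]].
Qed.

Lemma good_support (x : W) g : good2 g -> (forall u v, x (u, v) != 0 -> C g u) ->
  forall u v, C u v -> u != v -> ~ good2 u -> x (u, v) = 0 /\ x (u, u) = x (v, v).
Proof.
move=> Hg Hs u v Cuv Nuv Hb.
have Z1 : forall w, x (u, w) = 0.
  move=> w; case: (x (u, w) =P 0) => // /eqP /Hs Cgu.
  by case: Hb; apply: good2_C Hg Cgu.
have Z2 : x (v, v) = 0.
  case: (x (v, v) =P 0) => // /eqP /Hs Cgv.
  by case: Hb; apply: good2_C Hg (Ct Cgv (Cs Cuv)).
by rewrite !Z1 Z2.
Qed.

Lemma gens_P x : rad_gens s t Z x -> Pset x.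
Proof.
case=> [[a ->]|[[ai [aj [Nij Pij Lij NLji ->]]]|[H2 [a1 [a2 [N12 P12 A12 Hcl Hx]]]]]].
- split.
    apply/(K0P s t Z) => u v; rewrite g1E; case: (u =P v) => [->|_] /=; last by rewrite eqxx.
    by move=> _; exact: (Cr v).1.
  move=> u v Cuv Nuv _; rewrite !g1E (negbTE Nuv) !eqxx /=; split => //.
  case: asboolP => H; case: asboolP => H' //; exfalso.
    by apply: H'; apply: Ct H Cuv.
  by apply: H; apply: Ct H' (Cs Cuv).
- have Rij := (inL0P _ _).1 Lij.
  have NRji : ~ R aj ai by move=> H; apply: NLji; apply/inL0P.
  split; first exact: KE.
  move=> u v Cuv Nuv _; rewrite !deltaE.
  have D : forall w, ((w, w) == (ai, aj)) = false.
    by move=> w; apply/negP => /eqP [E1 E2]; subst; rewrite eqxx in Nij.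
  rewrite !D; split => //.
  have -> // : ((u, v) == (ai, aj)) = false.
  by apply/negP => /eqP [E1 E2]; subst; case: NRji; case: Cuv.
have Cl : C a1 a2 by apply/CP.
have Hg : good2 a1.
  split => //; exists a2; first by rewrite eq_sym.
  by split => // b /CP [Pb Ab]; apply: Hcl.
have supp : forall p q, p \in [:: a1; a2] -> q \in [:: a1; a2] ->
    (forall u v, delta k p q (u, v) != 0 -> C a1 u) /\ K (delta k p q).
  move=> p q Hp Hq.
  have Cp : C a1 p by move: Hp; rewrite !inE => /orP[] /eqP ->; [exact: Cr|].
  have Cq : C a1 q by move: Hq; rewrite !inE => /orP[] /eqP ->; [exact: Cr|].
  split; last by apply: KE; apply: (Ct (Cs Cp) Cq).1.
  by move=> u v; rewrite deltaE; case: ((u, v) =P (p, q)) => [[-> _]|]; rewrite ?eqxx.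
have gen : forall p q, p \in [:: a1; a2] -> q \in [:: a1; a2] -> Pset (delta k p q).
  move=> p q Hp Hq; have [S1 S2] := supp p q Hp Hq; split => //.
  exact: good_support Hg S1.
by case: Hx => ->; apply: gen; rewrite !inE eqxx ?orbT.
Qed.

Definition rep u := odflt u [pick w | `[< C u w >]].

Lemma rep_C u : C u (rep u).
Proof. by rewrite /rep; case: pickP => [w /asboolP //|_]; exact: Cr. Qed.

Lemma rep_eq u v : C u v -> rep u = rep v.
Proof.
move=> Cuv; rewrite /rep.
have -> : [pick w | `[< C u w >]] = [pick w | `[< C v w >]].
  apply: eq_pick => w; apply/asboolP/asboolP => H; [exact: Ct (Cs Cuv) H|exact: Ct Cuv H].
case: pickP => // N; by have := N v; move/asboolP: (Cr v) => ->.
Qed.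

Local Notation gens := (rad_gens s t Z (k := k)).

Lemma span_sclg c g : (c = 0 \/ gens g) -> spanW gens (scl c g).
Proof.
case=> [->|Hg]; first by rewrite scl0; apply: spanW_0.
by apply: spanW_scl; apply: spanW_in.
Qed.

Lemma P_span x : Pset x -> spanW gens x.
Proof.
move=> Px; have [Kx Hx] := Px.
set T1 := \sum_(p : A * A) scl ((p.1 != p.2)%:R * x p) (delta k p.1 p.2).
set T2 := \sum_w scl (`[< good2 w >]%:R * x (w, w)) (delta k w w).
set T3 := \sum_w scl (`[< ~ good2 w /\ rep w = w >]%:R * x (w, w)) (g1 w).
have -> : x = T1 + T2 + T3.
  apply/ffunP => [[u v]]; rewrite !ffunE /T1 /T2 /T3 !sum_ffunE.
  rewrite (sum_only (w0 := (u, v))); last first.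
    by move=> p Np; rewrite sclE deltaE -surjective_pairing [(u, v) == p]eq_sym (negbTE Np) mulr0.
  rewrite (sum_only (w0 := u) (F := fun w => _)); last first.
    move=> w Nw; rewrite sclE deltaE xpair_eqE.
    by rewrite eq_sym (negbTE Nw) mulr0.
  rewrite (sum_only (w0 := rep u) (F := fun w => _)); last first.
    move=> w Nw; rewrite sclE g1E; case: asboolP => [[_ Ew]|_]; last by rewrite mul0r mul0r.
    case: asboolP => [Cwu|_]; last by rewrite andbF mulr0.
    by move: Nw; rewrite -(rep_eq Cwu) Ew eqxx.
  rewrite !sclE !deltaE g1E /= !eqxx /=.
  have Cru : C (rep u) u by apply: Cs; apply: rep_C.
  rewrite (asboolT Cru) andbT xpair_eqE eqxx /=.
  rewrite (rep_eq Cru).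
  case: (u =P v) => [<-|/eqP Nuv] /=; last first.
    by rewrite eq_sym (negbTE Nuv) !mulr0 !addr0 mulr1 mul1r.
  rewrite eqxx !mulr1 mul0r add0r.
  case: (pselect (good2 u)) => [Hg|Hb].
    rewrite (asboolT Hg) asboolF ?mul0r ?addr0 ?mul1r //.
    by move=> [Hb _]; apply: Hb; apply: good2_C Hg (Cs Cru).
  rewrite (asboolF Hb) asboolT ?mul0r ?add0r ?mul1r; last first.
    by split => //; apply: bad_C Hb (Cs Cru).
  case: (rep u =P u) => [->//|/eqP N].
  have N' : u != rep u by rewrite eq_sym.
  by rewrite (Hx u (rep u) (rep_C u) N' Hb).2.
apply: spanW_add; [apply: spanW_add|]; apply: spanW_sum => /=.
- case=> a b /=; apply: span_sclg.
  case: (a =P b) => [->|/eqP Nab] /=; first by left; rewrite mul0r.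
  case: (x (a, b) =P 0) => [->|/eqP Hxab]; first by left; rewrite mulr0.
  right; have Rab := KR Kx Hxab.
  case: (pselect (R b a)) => [Rba|NR].
    have Cab : C a b by [].
    case: (pselect (good2 a)) => [Hg|Hb]; last first.
      by have := (Hx a b Cab Nab Hb).1; move/eqP: Hxab.
    right; right; split; first by case: Hg.
    exists a, b; split => //; first exact: Rab.1.
    + exact: (proj1 (CP a b) Cab).2.
    + by move=> b' P' A'; apply: (good2_two Hg Cab Nab); apply/CP.
    + exact: Or31.
  right; left; exists a, b; split => //; first exact: Rab.1.
    exact/inL0P.
  by move/inL0P.
- move=> w; apply: span_sclg.
  case: (pselect (good2 w)) => [Hg|Hb]; last by left; rewrite asboolF ?mul0r.
  right; right; right; have [H2 [a' Na [Cwa Hcl]]] := Hg; split => //.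
  exists w, a'; split.
  + by rewrite eq_sym.
  + exact: Cwa.1.1.
  + exact: (proj1 (CP w a') Cwa).2.
  + by move=> b P' A'; apply: Hcl; apply/CP.
  + exact: Or33.
move=> w; apply: span_sclg; right; left; by exists w.
Qed.

Lemma Rad_eq : addS (spanW gens) (@D0 _ _ s t k) = Pset.
Proof.
apply: funext => x; apply: propext; split.
  move=> [u [d [Hu [Hd ->]]]].
  have [_ [PD _]] := Pset_subspace.
  apply: PD; last by apply: DL_Pset; apply: D0_DL.
  by apply: (spanW_sub Pset_subspace) Hu => y; apply: gens_P.
move=> Px; exists x, 0; split; first exact: P_span.
by split; [exact: spanW_0 | rewrite addr0].
Qed.

Theorem main_rad : L0_radical s t Z (addS (spanW gens) (@D0 _ _ s t k)).
Proof.
rewrite Rad_eq; split; [exact: Pset_ideal' | exact: Pset_solvable |].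
by move=> I HI HS; apply: I_sub_P.
Qed.


End Alg.

Theorem theorem3p10 (k : closedFieldType) (V A : finType) (s t : A -> V)
    (Z : pred (seq A)) :
  quiver_connected s t ->
  Z_paths_len_ge2 s t Z ->
  Z_minimal Z ->
  B_finite s t Z ->
  L0_radical s t Z (k := k)
    (addS (spanW (rad_gens s t Z (k := k))) (D0 s t (k := k))).
Proof.
move=> _ HZ Hmin _.
exact: (main_rad k HZ Hmin).
Qed.
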